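(* Let $M$ be an $n$-dimensional manifold and let $\alpha\in\mathcal{A}(M)$ be extendible. Then there exists a unique open set $V\subset\mathbb{R}^n$ such that $(\alpha,V)\in\mathrm{EX}(M)$ and such that $U\subset V$ for every $U$ with $(\alpha,U)\in\mathrm{EX}(M)$.
   Context: Conventions: $M$ is an $n$-dimensional smooth manifold (Hausdorff, second countable) with maximal $C^\infty$ atlas $\mathcal{A}(M)$; every chart $\alpha\in\mathcal{A}(M)$ has open domain $\mathrm{dom}(\alpha)\subset M$ and open range $\mathrm{ran}(\alpha)\subset\mathbb{R}^n$. For $A\subset\mathbb{R}^n$, $\partial A$ is its topological boundary in $\mathbb{R}^n$; for $A\subset U\subset\mathbb{R}^n$, $\partial_U A$ is the topological boundary of $A$ relative to $U$ (for $A,U$ open, $\partial_U A=U\cap\partial A$). An admissible boundary point of $\alpha\in\mathcal{A}(M)$ is a point $p\in\partial\,\mathrm{ran}(\alpha)$ such that every sequence $(x_i)\subset\mathrm{dom}(\alpha)$ with $\alpha(x_i)\to p$ has no accumulation point in $M$; $B(\alpha)$ denotes the set of admissible boundary points of $\alpha$. An extension is a pair $(\alpha,U)$ with $\alpha\in\mathcal{A}(M)$, $U\subset\mathbb{R}^n$ open, $\mathrm{ran}(\alpha)\subset U$ and $\emptyset\neq\partial_U\mathrm{ran}(\alpha)\subset B(\alpha)$; $\mathrm{EX}(M)$ is the set of all extensions, and $\alpha$ is called extendible if $(\alpha,U)\in\mathrm{EX}(M)$ for some $U$. *)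

(* Defs.v *)
From HB Require Import structures.
From mathcomp Require Import all_boot all_order all_algebra.
From mathcomp Require Import all_classical all_reals all_analysis.
Set Implicit Arguments. Unset Strict Implicit. Unset Printing Implicit Defensive.
Import Order.TTheory GRing.Theory Num.Theory.
Import numFieldNormedType.Exports.
Local Open Scope classical_set_scope.
Local Open Scope ring_scope.

Section Manifolds.
Variables (R : realType) (n : nat).
Notation E := 'rV[R]_n.

Fixpoint iter_dir (vs : seq E) (f : E -> E) : E -> E :=
  match vs with
  | [::] => f
  | v :: vs' => fun x => 'D_v (iter_dir vs' f) x
  end.

Definition smooth_on (U : set E) (f : E -> E) : Prop :=
  forall vs : seq E,
    {within U, continuous (iter_dir vs f)} /\
    (forall x v, U x -> derivable (iter_dir vs f) x v).

Variable M : topologicalType.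

Record chart := Chart {
  cdom : set M;
  cmap : M -> E;
  cinv : E -> M;
  cdom_open : open cdom;
  cran_open : open (cmap @` cdom);
  cmapK : forall x, cdom x -> cinv (cmap x) = x;
  cmap_cont : {within cdom, continuous cmap};
  cinv_cont : {within cmap @` cdom, continuous cinv} }.

Definition cran (a : chart) : set E := cmap a @` cdom a.

Definition compatible (a b : chart) : Prop :=
  smooth_on (cmap b @` (cdom a `&` cdom b)) (cmap a \o cinv b) /\
  smooth_on (cmap a @` (cdom a `&` cdom b)) (cmap b \o cinv a).

Record smooth_manifold := SmoothManifold {
  atlas : set chart;
  mf_hausdorff : hausdorff_space M;
  mf_second_countable : @second_countable M;
  atlas_cover : forall p : M, exists2 a, atlas a & cdom a p;
  atlas_compat : forall a b, atlas a -> atlas b -> compatible a b;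
  atlas_maximal : forall c, (forall a, atlas a -> compatible c a) -> atlas c }.

Definition bdry (A : set E) : set E := closure A `\` interior A.

Definition rel_bdry (U A : set E) : set E := U `&` bdry A.

Definition admissible_bdry (a : chart) : set E :=
  [set p | bdry (cran a) p /\
     forall x : nat -> M, (forall i, cdom a (x i)) ->
       (cmap a \o x) @ \oo --> p ->
       forall q : M, ~ cluster (x @ \oo) q].

Definition EX (S : smooth_manifold) (a : chart) (U : set E) : Prop :=
  atlas S a /\ open U /\ cran a `<=` U /\
  rel_bdry U (cran a) !=set0 /\ rel_bdry U (cran a) `<=` admissible_bdry a.

Definition extendible (S : smooth_manifold) (a : chart) : Prop :=
  exists U, EX S a U.

End Manifolds.

(* Main.v *)
Require Import Defs.
From HB Require Import structures.
From mathcomp Require Import all_boot all_order all_algebra.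
From mathcomp Require Import all_classical all_reals all_analysis.
Import numFieldNormedType.Exports.
Local Open Scope classical_set_scope.
Local Open Scope ring_scope.

Theorem mainTheorem1 (R : realType) (n : nat) (M : topologicalType)
  (S : smooth_manifold R n M) (a : chart R n M) :
  atlas S a -> extendible S a ->
  exists! V : set 'rV[R]_n,
    open V /\ EX S a V /\ (forall U : set 'rV[R]_n, EX S a U -> U `<=` V).
Proof.
move=> Ha [U0 HU0].
set V := \bigcup_(U in EX S a) U.
have oV : open V by apply: bigcup_open => U [_ [oU _]].
have subV : forall U, EX S a U -> U `<=` V by move=> U HU x Ux; exists U.
have EV : EX S a V.
  case: (HU0) => _ [_ [cU [[p [Up bp]] _]]].
  split => //; split => //; split.
    by move=> x /cU Ux; exists U0.
  split; first by exists p; split => //; exists U0.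
  move=> q [[U HU Uq] bq].
  by case: HU => _ [_ [_ [_ HB]]]; apply: HB.
exists V; split; first by split => //; split.
move=> V' [_ [EV' H']].
apply/seteqP; split; first exact: H'.
exact: subV.
Qed.
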